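(* Let $a>0$ and let $x$ be real with $x<a$. Then for every integer $r\ge0$, $$\psi^{(r)}(a-x)-\psi^{(r)}(a)=-\sum_{n=1}^\infty\frac1n\frac{(x)_n}{(a)_n}\,Y_r\!\left(-H_n^{(1)}(a),\,1!\,H_n^{(2)}(a),\dots,(-1)^r(r-1)!\,H_n^{(r)}(a)\right)$$ (for $r=0$ the left side is $\psi(a-x)-\psi(a)$ and $Y_0=1$), where the $j$-th argument of $Y_r$ is $(-1)^j(j-1)!\,H_n^{(j)}(a)$.
   Context: $\psi=\Gamma'/\Gamma$ is the digamma function and $\psi^{(r)}$ its $r$-th derivative. $(y)_n=y(y+1)\cdots(y+n-1)$. $H_n^{(j)}(a)=\sum_{k=0}^{n-1}(k+a)^{-j}$. Complete (exponential) Bell polynomials: $Y_0=1$ and for $r\ge1$, $Y_r(x_1,\dots,x_r)=\sum \frac{r!}{k_1!\cdots k_r!}\prod_{j=1}^r\left(\frac{x_j}{j!}\right)^{k_j}$, the sum over all tuples of nonnegative integers $(k_1,\dots,k_r)$ with $k_1+2k_2+\cdots+rk_r=r$. *)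

(* Defs.v *)
From Stdlib Require Import Reals Lra Lia List Arith.
Import ListNotations.
Open Scope R_scope.

(* Gauss/Euler product whose limit defines Gamma(z) for z > 0:
   Gamma(z) = lim_{n->oo} n! n^z / (z (z+1) ... (z+n)). *)
Fixpoint prod_shift (z : R) (n : nat) : R :=
  match n with
  | O => z
  | S m => prod_shift z m * (z + INR (S m))
  end.

Definition gauss_seq (z : R) (n : nat) : R :=
  INR (fact n) * Rpower (INR n) z / prod_shift z n.

Fixpoint poch (y : R) (n : nat) : R :=
  match n with
  | O => 1
  | S m => poch y m * (y + INR m)
  end.

Fixpoint Hsum (n j : nat) (a : R) : R :=
  match n with
  | O => 0
  | S m => Hsum m j a + / (INR m + a) ^ j
  end.

Fixpoint tuples (len b : nat) : list (list nat) :=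
  match len with
  | O => [[]]
  | S m => flat_map (fun k => map (cons k) (tuples m b)) (seq 0 (S b))
  end.

Fixpoint wsum (start : nat) (ks : list nat) : nat :=
  match ks with
  | [] => 0%nat
  | k :: t => (start * k + wsum (S start) t)%nat
  end.

Fixpoint bell_factor (x : nat -> R) (start : nat) (ks : list nat) : R :=
  match ks with
  | [] => 1
  | k :: t => (x start / INR (fact start)) ^ k / INR (fact k)
              * bell_factor x (S start) t
  end.

(* Complete exponential Bell polynomial Y_r(x_1,...,x_r):
   sum over (k_1,...,k_r) with k_1 + 2 k_2 + ... + r k_r = r of
   r!/(k_1!...k_r!) prod_j (x_j/j!)^{k_j}.  (Y_0 = 1.) *)
Definition bellY (r : nat) (x : nat -> R) : R :=
  fold_right Rplus 0
    (map (fun ks => INR (fact r) * bell_factor x 1 ks)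
         (filter (fun ks => Nat.eqb (wsum 1 ks) r) (tuples r r))).

(* Main.v *)
Require Import Defs.
From Stdlib Require Import Reals Lra Lia List Arith Psatz FunctionalExtensionality Classical ClassicalEpsilon.
Import ListNotations.
Open Scope R_scope.

Definition lsum (l : list R) : R := fold_right Rplus 0 l.

Lemma lsum_app l1 l2 : lsum (l1 ++ l2) = lsum l1 + lsum l2.
Proof. induction l1; simpl; [lra| rewrite IHl1; lra]. Qed.

Lemma lsum_map_scal {A} (c : R) (f : A -> R) l :
  lsum (map (fun y => c * f y) l) = c * lsum (map f l).
Proof. induction l; simpl; [lra| rewrite IHl; lra]. Qed.

Lemma lsum_flat_map {A B} (f : B -> R) (g : A -> list B) l :
  lsum (map f (flat_map g l)) = lsum (map (fun a => lsum (map f (g a))) l).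
Proof. induction l; simpl; auto. rewrite map_app, lsum_app, IHl; auto. Qed.

Lemma filter_flat_map' {A B} (P : B -> bool) (g : A -> list B) l :
  filter P (flat_map g l) = flat_map (fun a => filter P (g a)) l.
Proof. induction l; simpl; auto. rewrite filter_app, IHl; auto. Qed.

Lemma filter_map_cons {A} (P : list A -> bool) k (T : list (list A)) :
  filter P (map (cons k) T) = map (cons k) (filter (fun t => P (k :: t)) T).
Proof. induction T; simpl; auto. destruct (P (k :: a)); simpl; rewrite IHT; auto. Qed.

Lemma filter_allfalse {A} (P : A -> bool) l : (forall t, P t = false) -> filter P l = [].
Proof. intros H; induction l; simpl; auto. rewrite H; auto. Qed.

Lemma lsum_seq_sum (f : nat -> R) n : lsum (map f (seq 0 (S n))) = sum_f_R0 f n.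
Proof.
  induction n. simpl; lra.
  rewrite seq_S, map_app, lsum_app, IHn. simpl. rewrite Rplus_0_r. reflexivity.
Qed.

Lemma sum_zero (f : nat -> R) N : (forall k, (k <= N)%nat -> f k = 0) -> sum_f_R0 f N = 0.
Proof.
  intros H; induction N; simpl. apply H; lia.
  rewrite IHN by (intros; apply H; lia). rewrite H by lia. lra.
Qed.

Lemma sum_first (f : nat -> R) N : (forall k, (1 <= k <= N)%nat -> f k = 0) -> sum_f_R0 f N = f 0%nat.
Proof.
  intros H; induction N; simpl. auto.
  rewrite IHN by (intros; apply H; lia). rewrite (H (S N)) by lia. lra.
Qed.

Lemma sum_single (g : nat -> R) s N :
  sum_f_R0 (fun j => if Nat.eqb j s then g j else 0) N = if Nat.leb s N then g s else 0.
Proof.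
  induction N.
  - simpl. destruct s; simpl; auto.
  - rewrite tech5, IHN. cbv beta.
    destruct (Nat.eqb_spec (S N) s); destruct (Nat.leb_spec s N);
      destruct (Nat.leb_spec s (S N)); try lia; try lra.
    rewrite e; lra.
Qed.

Lemma sum_swap (F : nat -> nat -> R) N M :
  sum_f_R0 (fun k => sum_f_R0 (fun j => F k j) N) M =
  sum_f_R0 (fun j => sum_f_R0 (fun k => F k j) M) N.
Proof.
  induction M; simpl. reflexivity.
  rewrite IHM. rewrite <- sum_plus. reflexivity.
Qed.

Lemma sum_scal_l (f : nat -> R) c N : c * sum_f_R0 f N = sum_f_R0 (fun k => c * f k) N.
Proof. induction N; simpl; [lra| rewrite <- IHN; lra]. Qed.

Definition cf (x : nat -> R) (s k : nat) : R := (x s / INR (fact s)) ^ k / INR (fact k).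

Definition B (x : nat -> R) (s len b w : nat) : R :=
  lsum (map (bell_factor x s) (filter (fun ks => Nat.eqb (wsum s ks) w) (tuples len b))).

Lemma B_0 x s b w : B x s 0 b w = if Nat.eqb w 0 then 1 else 0.
Proof. unfold B; simpl. destruct w; simpl; lra. Qed.

Lemma B_S x s len b w : B x s (S len) b w =
  sum_f_R0 (fun k => if Nat.leb (s*k) w then cf x s k * B x (S s) len b (w - s*k) else 0) b.
Proof.
  unfold B. change (tuples (S len) b) with (flat_map (fun k => map (cons k) (tuples len b)) (seq 0 (S b))). rewrite filter_flat_map', lsum_flat_map, <- lsum_seq_sum.
  f_equal. apply map_ext. intro k.
  rewrite filter_map_cons, map_map. simpl.
  rewrite (lsum_map_scal (cf x s k) (bell_factor x (S s))).
  destruct (Nat.leb_spec (s*k) w).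
  - f_equal. f_equal. f_equal. apply filter_ext. intro t.
    destruct (Nat.eqb_spec (s*k + wsum (S s) t) w); destruct (Nat.eqb_spec (wsum (S s) t) (w - s*k)); auto; lia.
  - rewrite filter_allfalse. simpl; lra.
    intro t. apply Nat.eqb_neq. lia.
Qed.

Lemma cf_0 x s : cf x s 0 = 1.
Proof. unfold cf; simpl; lra. Qed.

Lemma B_zero x s len b : (1 <= s)%nat -> B x s len b 0 = 1.
Proof.
  revert s. induction len; intros s Hs.
  - rewrite B_0; reflexivity.
  - rewrite B_S. rewrite sum_first.
    + rewrite Nat.mul_0_r. simpl. rewrite cf_0, IHlen by lia. lra.
    + intros k Hk. destruct (Nat.leb_spec (s*k) 0); auto. nia.
Qed.

Lemma W_lemma x b len : forall s w N, (1 <= s)%nat -> (w < s + len)%nat -> (w <= b)%nat -> (w <= N)%nat ->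
 INR w * B x s len b w = sum_f_R0 (fun j => if (Nat.leb s j && Nat.leb j w)%bool
    then INR j * (x j / INR (fact j)) * B x s len b (w - j) else 0) N.
Proof.
  induction len; intros s w N Hs Hw Hb HN.
  - rewrite B_0. rewrite sum_zero.
    + destruct w; simpl; ring.
    + intros k Hk. destruct (Nat.leb_spec s k); destruct (Nat.leb_spec k w); simpl; try lra; lia.
  - set (B' := B x (S s) len b).
    assert (E1: INR w * B x s (S len) b w =
      sum_f_R0 (fun k => if Nat.leb (s*k) w then cf x s k * INR (s*k) * B' (w-s*k)%nat else 0) b
    + sum_f_R0 (fun k => if Nat.leb (s*k) w then cf x s k * (INR (w - s*k) * B' (w - s*k)%nat) else 0) b).
    { rewrite B_S, sum_scal_l, <- sum_plus. apply sum_eq; intros k _. fold B'.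
      destruct (Nat.leb_spec (s*k) w).
      - rewrite minus_INR by lia. ring.
      - ring. }
    assert (E2: sum_f_R0 (fun k => if Nat.leb (s*k) w then cf x s k * (INR (w - s*k) * B' (w - s*k)%nat) else 0) b =
      sum_f_R0 (fun j => if (Nat.leb (S s) j && Nat.leb j w)%bool then INR j * (x j / INR (fact j)) * B x s (S len) b (w - j) else 0) N).
    { transitivity (sum_f_R0 (fun k => sum_f_R0 (fun j => if Nat.leb (s*k) w then cf x s k *
         (if (Nat.leb (S s) j && Nat.leb j (w - s*k))%bool then INR j * (x j / INR (fact j)) * B' (w - s*k - j)%nat else 0) else 0) N) b).
      { apply sum_eq; intros k Hk. destruct (Nat.leb_spec (s*k) w).
        - unfold B'. rewrite (IHlen (S s) (w - s*k)%nat N) by lia. rewrite sum_scal_l. reflexivity.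
        - symmetry; apply sum_zero; intros; reflexivity. }
      rewrite sum_swap. apply sum_eq; intros j Hj.
      rewrite B_S. fold B'.
      destruct (Nat.leb_spec (S s) j); destruct (Nat.leb_spec j w); simpl.
      - rewrite sum_scal_l. apply sum_eq; intros k Hk.
        destruct (Nat.leb_spec (s*k) w); destruct (Nat.leb_spec j (w - s*k));
          destruct (Nat.leb_spec (s*k) (w-j)); simpl; try lia; try ring.
        replace (w - s*k - j)%nat with (w - j - s*k)%nat by lia. ring.
      - apply sum_zero; intros k Hk.
        destruct (Nat.leb_spec (s*k) w); destruct (Nat.leb_spec j (w - s*k)); simpl; try lia; ring.
      - apply sum_zero; intros k Hk. destruct (Nat.leb (s*k) w); ring.
      - apply sum_zero; intros k Hk. destruct (Nat.leb (s*k) w); ring. }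
    assert (E3: sum_f_R0 (fun k => if Nat.leb (s*k) w then cf x s k * INR (s*k) * B' (w-s*k)%nat else 0) b =
      if Nat.leb s w then INR s * (x s / INR (fact s)) * B x s (S len) b (w - s) else 0).
    { destruct (Nat.leb_spec s w).
      - rewrite B_S. fold B'. rewrite decomp_sum by lia.
        rewrite Nat.mul_0_r. simpl (Nat.leb 0 w). simpl INR.
        rewrite sum_scal_l.
        destruct b as [|b']; [lia|]. simpl pred. rewrite tech5.
        destruct (Nat.leb_spec (s * S b') (w - s)); [nia|].
        replace (cf x s 0 * 0 * B' (w-0)%nat) with 0 by ring. rewrite Rmult_0_r, Rplus_0_l, Rplus_0_r.
        apply sum_eq; intros i Hi.
        destruct (Nat.leb_spec (s * S i) w); destruct (Nat.leb_spec (s*i) (w - s)); try lia.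
        + replace (w - s * S i)%nat with (w - s - s*i)%nat by lia.
          unfold cf. rewrite fact_simpl, !mult_INR. simpl pow.
          assert (INR (fact i) <> 0) by apply INR_fact_neq_0.
          assert (INR (fact s) <> 0) by apply INR_fact_neq_0.
          assert (INR (S i) <> 0) by (apply not_0_INR; lia).
          field. auto.
        + ring.
      - apply sum_zero; intros k Hk. destruct k.
        + rewrite Nat.mul_0_r. simpl. ring.
        + destruct (Nat.leb_spec (s * S k) w); [nia| reflexivity]. }
    set (T := fun j => INR j * (x j / INR (fact j)) * B x s (S len) b (w - j)) in *.
    assert (E4: sum_f_R0 (fun j => if (Nat.leb s j && Nat.leb j w)%bool then T j else 0) N =
       sum_f_R0 (fun j => if Nat.eqb j s then (if Nat.leb s w then T j else 0) else 0) N
     + sum_f_R0 (fun j => if (Nat.leb (S s) j && Nat.leb j w)%bool then T j else 0) N).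
    { rewrite <- sum_plus; apply sum_eq; intros j _.
      destruct (Nat.eqb_spec j s); destruct (Nat.leb_spec s j); destruct (Nat.leb_spec (S s) j);
        destruct (Nat.leb_spec j w); destruct (Nat.leb_spec s w); simpl; try lia; try lra. }
    rewrite sum_single in E4.
    rewrite E1, E2, E3. unfold T in E4. rewrite E4.
    destruct (Nat.leb_spec s w); destruct (Nat.leb_spec s N); try lia; lra.
Qed.

Definition Cb (n k : nat) : R := if Nat.leb k n then C n k else 0.

Lemma C_nn n : C n n = 1.
Proof. unfold C. rewrite Nat.sub_diag. simpl. field. apply INR_fact_neq_0. Qed.

Lemma C_n0 n : C n 0 = 1.
Proof. unfold C. rewrite Nat.sub_0_r. simpl. field. apply INR_fact_neq_0. Qed.

Lemma Cb_pascal n i : Cb (S n) (S i) = Cb n i + Cb n (S i).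
Proof.
  unfold Cb. destruct (Nat.leb_spec (S i) (S n)); destruct (Nat.leb_spec i n);
    destruct (Nat.leb_spec (S i) n); try lia.
  - rewrite pascal by lia. reflexivity.
  - replace i with n by lia. rewrite !C_nn. lra.
  - lra.
Qed.

Lemma Cb_0 n : Cb n 0 = 1.
Proof. unfold Cb. simpl. apply C_n0. Qed.

Lemma Cb_nonneg n k : 0 <= Cb n k.
Proof.
  unfold Cb, C. destruct (Nat.leb k n); [|lra].
  apply Rle_mult_inv_pos. apply pos_INR.
  apply Rmult_lt_0_compat; apply INR_fact_lt_0.
Qed.

Fixpoint Yf (x : nat -> R) (fuel r : nat) : R :=
  match fuel with
  | O => 1
  | S f => match r with
           | O => 1
           | S r' => sum_f_R0 (fun k => Cb r' k * x (S k) * Yf x f (r' - k)) r'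
           end
  end.

Definition Yrec x r := Yf x r r.

Lemma Yf_stable x : forall f1 f2 r, (r <= f1)%nat -> (r <= f2)%nat -> Yf x f1 r = Yf x f2 r.
Proof.
  induction f1; intros f2 r H1 H2.
  - assert (r = 0%nat) by lia. subst. destruct f2; reflexivity.
  - destruct r. destruct f2; reflexivity.
    destruct f2. lia. simpl. apply sum_eq; intros k Hk. rewrite (IHf1 f2) by lia. reflexivity.
Qed.

Lemma Yrec_0 x : Yrec x 0 = 1.
Proof. reflexivity. Qed.

Lemma Yrec_S x r : Yrec x (S r) = sum_f_R0 (fun k => Cb r k * x (S k) * Yrec x (r - k)) r.
Proof.
  unfold Yrec at 1. simpl. apply sum_eq; intros k Hk. unfold Yrec. rewrite (Yf_stable x r (r-k)%nat (r-k)%nat) by lia. reflexivity.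
Qed.

Lemma B_Yrec x L b : forall w, (w <= L)%nat -> (w <= b)%nat -> INR (fact w) * B x 1 L b w = Yrec x w.
Proof.
  intro w. induction w as [w IH] using (well_founded_induction lt_wf). intros HL Hb.
  destruct w as [|r].
  - rewrite B_zero by lia. unfold Yrec; simpl. ring.
  - assert (HW := W_lemma x b L 1 (S r) (S r) ltac:(lia) ltac:(lia) Hb ltac:(lia)).
    replace (INR (fact (S r)) * B x 1 L b (S r)) with (INR (fact r) * (INR (S r) * B x 1 L b (S r))) by (rewrite fact_simpl, mult_INR; ring). rewrite HW.
    rewrite decomp_sum by lia. simpl pred. simpl (Nat.leb 1 0). rewrite Rplus_0_l.
    rewrite Yrec_S, sum_scal_l. apply sum_eq; intros k Hk.
    destruct (Nat.leb_spec 1 (S k)); [|lia]. destruct (Nat.leb_spec (S k) (S r)); [|lia]. cbn [andb].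
    rewrite <- (IH (r - k)%nat) by lia.
    replace (S r - S k)%nat with (r - k)%nat by lia.
    unfold Cb. destruct (Nat.leb_spec k r); [|lia]. unfold C.
    rewrite fact_simpl, mult_INR.
    assert (INR (fact k) <> 0) by apply INR_fact_neq_0.
    assert (INR (fact (r - k)) <> 0) by apply INR_fact_neq_0.
    assert (INR (S k) <> 0) by (apply not_0_INR; lia).
    field. auto.
Qed.

Lemma bellY_Yrec r x : bellY r x = Yrec x r.
Proof.
  unfold bellY. rewrite (lsum_map_scal (INR (fact r)) (bell_factor x 1)).
  apply B_Yrec; lia.
Qed.

Lemma dlim_eq f a l1 l2 : l1 = l2 -> derivable_pt_lim f a l1 -> derivable_pt_lim f a l2.
Proof. intros ->; auto. Qed.

Lemma dext f g a l : (forall y, f y = g y) -> derivable_pt_lim f a l -> derivable_pt_lim g a l.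
Proof. intros H. replace g with f; auto. apply functional_extensionality; auto. Qed.

Lemma dmul f g x lf lg : derivable_pt_lim f x lf -> derivable_pt_lim g x lg ->
  derivable_pt_lim (fun y => f y * g y) x (lf * g x + f x * lg).
Proof. intros; apply (derivable_pt_lim_mult f g x lf lg); auto. Qed.

Lemma dplus f g x lf lg : derivable_pt_lim f x lf -> derivable_pt_lim g x lg ->
  derivable_pt_lim (fun y => f y + g y) x (lf + lg).
Proof. intros; apply (derivable_pt_lim_plus f g x lf lg); auto. Qed.

Lemma dminus f g x lf lg : derivable_pt_lim f x lf -> derivable_pt_lim g x lg ->
  derivable_pt_lim (fun y => f y - g y) x (lf - lg).
Proof. intros; apply (derivable_pt_lim_minus f g x lf lg); auto. Qed.

Lemma dconst c x : derivable_pt_lim (fun _ => c) x 0.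
Proof. apply (derivable_pt_lim_const c x). Qed.

Lemma dsum (F : nat -> R -> R) dF a n :
  (forall k, (k <= n)%nat -> derivable_pt_lim (F k) a (dF k)) ->
  derivable_pt_lim (fun y => sum_f_R0 (fun k => F k y) n) a (sum_f_R0 dF n).
Proof.
  induction n; intros H.
  - simpl. apply (dext (F 0%nat)); [reflexivity| apply H; lia].
  - simpl. apply dplus. apply IHn; intros; apply H; lia. apply H; lia.
Qed.

Lemma Cb_out r : Cb r (S r) = 0.
Proof. unfold Cb. destruct (Nat.leb_spec (S r) r); [lia|reflexivity]. Qed.

Lemma Yrec_deriv (v : R -> nat -> R) a0 :
  (forall j, (1 <= j)%nat -> derivable_pt_lim (fun a => v a j) a0 (v a0 (S j))) ->
  forall r, derivable_pt_lim (fun a => Yrec (v a) r) a0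
      (Yrec (v a0) (S r) - v a0 1%nat * Yrec (v a0) r).
Proof.
  intros Hv r. induction r as [r IH] using (well_founded_induction lt_wf).
  destruct r as [|r].
  - apply (dlim_eq _ _ 0).
    { rewrite Yrec_S. simpl. rewrite Cb_0. unfold Yrec; simpl. ring. }
    apply (dext (fun _ => 1)); [reflexivity| apply dconst].
  - apply (dext (fun a => sum_f_R0 (fun k => Cb r k * v a (S k) * Yrec (v a) (r - k)) r)).
    { intro; rewrite Yrec_S; reflexivity. }
    apply (dlim_eq _ _ (sum_f_R0 (fun k => Cb r k * (v a0 (S (S k)) * Yrec (v a0) (r-k) +
       v a0 (S k) * (Yrec (v a0) (S (r-k)) - v a0 1%nat * Yrec (v a0) (r-k)))) r)).
    { assert (HQ: sum_f_R0 (fun k => Cb r k * v a0 (S k) * Yrec (v a0) (S (r - k))) r =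
          v a0 1%nat * Yrec (v a0) (S r) +
          sum_f_R0 (fun i => Cb r (S i) * v a0 (S (S i)) * Yrec (v a0) (r - i)) r).
      { transitivity (sum_f_R0 (fun k => Cb r k * v a0 (S k) * Yrec (v a0) (S (r - k))) (S r)).
        { rewrite tech5, Cb_out. ring. }
        rewrite decomp_sum by lia. simpl pred. rewrite Cb_0, Nat.sub_0_r. f_equal. ring.
        apply sum_eq; intros i Hi. destruct (Nat.eq_dec i r).
        - subst. rewrite Cb_out. ring.
        - replace (S (r - S i)) with (r - i)%nat by lia. reflexivity. }
      assert (HY2: Yrec (v a0) (S (S r)) = v a0 1%nat * Yrec (v a0) (S r) +
          sum_f_R0 (fun i => Cb r i * v a0 (S (S i)) * Yrec (v a0) (r - i)) r +
          sum_f_R0 (fun i => Cb r (S i) * v a0 (S (S i)) * Yrec (v a0) (r - i)) r).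
      { rewrite Yrec_S. rewrite decomp_sum by lia. simpl pred.
        rewrite Cb_0, Nat.sub_0_r, Rplus_assoc, <- sum_plus. f_equal. ring.
        apply sum_eq; intros i Hi. rewrite Cb_pascal.
        replace (S r - S i)%nat with (r-i)%nat by lia. ring. }
      transitivity (sum_f_R0 (fun k => Cb r k * v a0 (S (S k)) * Yrec (v a0) (r-k)) r +
          sum_f_R0 (fun k => Cb r k * v a0 (S k) * Yrec (v a0) (S (r - k))) r -
          v a0 1%nat * sum_f_R0 (fun k => Cb r k * v a0 (S k) * Yrec (v a0) (r - k)) r).
      { rewrite sum_scal_l, <- sum_plus, <- minus_sum. apply sum_eq; intros; ring. }
      rewrite <- Yrec_S, HQ, HY2. ring. }
    apply (dsum (fun k y => Cb r k * v y (S k) * Yrec (v y) (r - k))). intros k Hk.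
    apply (dlim_eq _ _ ((Cb r k * v a0 (S (S k))) * Yrec (v a0) (r-k) +
        (Cb r k * v a0 (S k)) * (Yrec (v a0) (S (r - k)) - v a0 1%nat * Yrec (v a0) (r - k)))).
    { ring. }
    apply (dmul (fun y => Cb r k * v y (S k)) (fun y => Yrec (v y) (r - k))).
    + apply (dlim_eq _ _ (0 * v a0 (S k) + Cb r k * v a0 (S (S k)))). ring.
      apply (dmul (fun _ => Cb r k) (fun y => v y (S k))). apply dconst. apply Hv; lia.
    + apply IH; lia.
Qed.

Lemma Yrec_nonneg c : (forall j, 0 <= c j) -> forall r, 0 <= Yrec c r.
Proof.
  intros Hc r. induction r as [r IH] using (well_founded_induction lt_wf).
  destruct r. rewrite Yrec_0; lra.
  rewrite Yrec_S. apply cond_pos_sum. intro k.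
  apply Rmult_le_pos. apply Rmult_le_pos. apply Cb_nonneg. apply Hc.
  destruct (le_lt_dec k r). apply IH; lia. replace (r - k)%nat with 0%nat by lia. rewrite Yrec_0; lra.
Qed.

Lemma Yrec_bound v c M : (forall j, (1 <= j)%nat -> Rabs (v j) <= c j * M) ->
  (forall j, 0 <= c j) -> 1 <= M -> forall r, Rabs (Yrec v r) <= Yrec c r * M ^ r.
Proof.
  intros Hv Hc HM r. induction r as [r IH] using (well_founded_induction lt_wf).
  destruct r. rewrite !Yrec_0. simpl. rewrite Rabs_R1. lra.
  rewrite !Yrec_S. eapply Rle_trans. apply Rsum_abs.
  rewrite Rmult_comm, sum_scal_l. apply sum_Rle. intros k Hk. rewrite (Rmult_comm (M ^ S r)).
  rewrite !Rabs_mult, (Rabs_pos_eq (Cb r k)) by apply Cb_nonneg.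
  assert (H1 := Hv (S k) ltac:(lia)).
  assert (H2 := IH (r - k)%nat ltac:(lia)).
  assert (H3: M ^ (S (r - k)) <= M ^ (S r)) by (apply Rle_pow; [lra|lia]).
  assert (0 <= Cb r k) by apply Cb_nonneg.
  assert (0 <= Yrec c (r - k)) by (apply Yrec_nonneg; auto).
  assert (0 <= c (S k)) by auto.
  assert (0 <= M ^ (r - k)) by (apply pow_le; lra).
  simpl in H3.
  apply Rle_trans with (Cb r k * (c (S k) * M) * (Yrec c (r - k) * M ^ (r - k))).
  - apply Rmult_le_compat. apply Rmult_le_pos; auto; apply Rabs_pos. apply Rabs_pos.
    apply Rmult_le_compat_l; auto. auto.
  - replace (Cb r k * (c (S k) * M) * (Yrec c (r - k) * M ^ (r - k))) with
      ((Cb r k * c (S k) * Yrec c (r - k)) * (M * M ^ (r - k))) by ring.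
    apply Rmult_le_compat_l. apply Rmult_le_pos; auto. apply Rmult_le_pos; auto. auto.
Qed.

Lemma dcomp f g x l1 l2 : derivable_pt_lim f x l1 -> derivable_pt_lim g (f x) l2 ->
  derivable_pt_lim (fun y => g (f y)) x (l2 * l1).
Proof. intros; apply (derivable_pt_lim_comp f g x l1 l2); auto. Qed.

Lemma did x : derivable_pt_lim (fun y => y) x 1.
Proof. apply derivable_pt_lim_id. Qed.

Lemma dinv f x l : derivable_pt_lim f x l -> f x <> 0 ->
  derivable_pt_lim (fun y => / f y) x (- l / (f x)^2).
Proof.
  intros H Hf.
  apply (dext (fun y => 1 / f y)). intro; unfold Rdiv; ring.
  apply (dlim_eq _ _ ((0 * f x - l * 1) / Rsqr (f x))).
  unfold Rsqr; simpl; field; auto.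
  apply (derivable_pt_lim_div (fun _ => 1) f x 0 l); auto. apply dconst.
Qed.

Definition vv (n : nat) (a : R) (j : nat) : R := (-1)^j * INR (fact (j - 1)) * Hsum n j a.

Lemma poch_pos a n : 0 < a -> 0 < poch a n.
Proof.
  intros; induction n; simpl; [lra|]. apply Rmult_lt_0_compat; auto.
  pose proof (pos_INR n); lra.
Qed.

Lemma dinvpow m j a0 : 0 < INR m + a0 ->
  derivable_pt_lim (fun a => / (INR m + a) ^ j) a0 (- INR j * / (INR m + a0) ^ (S j)).
Proof.
  intros H.
  assert (Hp: derivable_pt_lim (fun a => (INR m + a)^j) a0 (INR j * (INR m + a0)^(pred j))).
  { apply (dlim_eq _ _ (INR j * (INR m + a0)^(pred j) * 1)). ring.
    apply (dcomp (fun a => INR m + a) (fun y => y^j)).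
    - apply (dlim_eq _ _ (0 + 1)). ring. apply dplus. apply dconst. apply did.
    - apply derivable_pt_lim_pow. }
  apply (dlim_eq _ _ (- (INR j * (INR m + a0) ^ pred j) / ((INR m + a0)^j)^2)).
  { assert (INR m + a0 <> 0) by lra.
    destruct j.
    - simpl. field. auto.
    - simpl pred. simpl pow. field. split; auto. apply pow_nonzero; auto. }
  apply dinv; auto. apply pow_nonzero; lra.
Qed.

Lemma Hsum_deriv n j a0 : 0 < a0 ->
  derivable_pt_lim (fun a => Hsum n j a) a0 (- INR j * Hsum n (S j) a0).
Proof.
  intros Ha. induction n.
  - simpl. apply (dlim_eq _ _ 0). ring. apply dconst.
  - cbn [Hsum]. apply (dlim_eq _ _ (- INR j * Hsum n (S j) a0 + - INR j * / (INR n + a0) ^ (S j))). ring.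
    apply dplus; auto. apply dinvpow. pose proof (pos_INR n); lra.
Qed.

Lemma vv_deriv n a0 j : 0 < a0 -> (1 <= j)%nat ->
  derivable_pt_lim (fun a => vv n a j) a0 (vv n a0 (S j)).
Proof.
  intros Ha Hj. unfold vv.
  apply (dlim_eq _ _ (0 * Hsum n j a0 + (-1)^j * INR (fact (j-1)) * (- INR j * Hsum n (S j) a0))).
  { replace (S j - 1)%nat with j by lia.
    destruct j as [|j]; [lia|]. replace (S j - 1)%nat with j by lia.
    rewrite fact_simpl, mult_INR. simpl pow. ring. }
  apply (dmul (fun _ => (-1)^j * INR (fact (j-1))) (fun a => Hsum n j a)).
  apply dconst. apply Hsum_deriv; auto.
Qed.

Lemma invpoch_deriv n a0 : 0 < a0 ->
  derivable_pt_lim (fun a => / poch a n) a0 (- Hsum n 1 a0 / poch a0 n).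
Proof.
  intros Ha. induction n.
  - simpl. apply (dlim_eq _ _ 0). field. apply (dext (fun _ => / 1)). reflexivity. apply dconst.
  - assert (0 < poch a0 n) by (apply poch_pos; auto).
    assert (0 < a0 + INR n) by (pose proof (pos_INR n); lra).
    apply (dext (fun a => / poch a n * / (a + INR n))).
    { intro y. simpl. destruct (Req_dec (poch y n) 0) as [E|E].
      - rewrite E. rewrite Rmult_0_l. rewrite Rinv_0. ring.
      - destruct (Req_dec (y + INR n) 0) as [E2|E2].
        + rewrite E2, Rmult_0_r, !Rinv_0. ring.
        + rewrite Rinv_mult. reflexivity. }
    apply (dlim_eq _ _ ((- Hsum n 1 a0 / poch a0 n) * / (a0 + INR n) + / poch a0 n * (- (1 + 0) / (a0 + INR n)^2))).
    { simpl. field. split; lra. }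
    apply (dmul (fun a => / poch a n) (fun a => / (a + INR n))); auto.
    apply (dinv (fun a => a + INR n)). apply dplus. apply did. apply dconst. lra.
Qed.

Definition term (r : nat) (x a : R) (m : nat) : R :=
  / INR (S m) * (poch x (S m) / poch a (S m)) *
  bellY r (fun j => (-1) ^ j * INR (fact (j - 1)) * Hsum (S m) j a).

Lemma term_Yrec r x a m : term r x a m =
  / INR (S m) * poch x (S m) * / poch a (S m) * Yrec (vv (S m) a) r.
Proof. unfold term. rewrite bellY_Yrec. unfold vv, Rdiv. ring. Qed.

Lemma term_deriv r x m a0 : 0 < a0 ->
  derivable_pt_lim (fun a => term r x a m) a0 (term (S r) x a0 m).
Proof.
  intros Ha.
  apply (dext (fun a => (/ INR (S m) * poch x (S m)) * (/ poch a (S m) * Yrec (vv (S m) a) r))).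
  { intro; rewrite term_Yrec; ring. }
  rewrite term_Yrec.
  apply (dlim_eq _ _ (0 * (/ poch a0 (S m) * Yrec (vv (S m) a0) r) + (/ INR (S m) * poch x (S m)) *
     ((- Hsum (S m) 1 a0 / poch a0 (S m)) * Yrec (vv (S m) a0) r + / poch a0 (S m) *
      (Yrec (vv (S m) a0) (S r) - vv (S m) a0 1%nat * Yrec (vv (S m) a0) r)))).
  { unfold vv. simpl pow. simpl fact. simpl INR. unfold Rdiv. ring. }
  apply (dmul (fun _ => / INR (S m) * poch x (S m)) (fun a => / poch a (S m) * Yrec (vv (S m) a) r)). apply dconst.
  apply (dmul (fun a => / poch a (S m)) (fun a => Yrec (vv (S m) a) r)).
  apply invpoch_deriv; auto.
  apply (Yrec_deriv (fun a => vv (S m) a)). intros j Hj. apply vv_deriv; auto.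
Qed.

Lemma Hsum_nonneg n j a : 0 < a -> 0 <= Hsum n j a.
Proof.
  intros Ha; induction n; simpl; [lra|].
  assert (0 < INR n + a) by (pose proof (pos_INR n); lra).
  assert (0 < / (INR n + a)^j) by (apply Rinv_0_lt_compat, pow_lt; auto). lra.
Qed.

Lemma Hsum_incr n m j a : 0 < a -> (n <= m)%nat -> Hsum n j a <= Hsum m j a.
Proof.
  intros Ha H; induction H; [lra|]. simpl.
  assert (0 < INR m + a) by (pose proof (pos_INR m); lra).
  assert (0 < / (INR m + a)^j) by (apply Rinv_0_lt_compat, pow_lt; auto). lra.
Qed.

Lemma poch_mono b a n : 0 < b <= a -> poch b n <= poch a n.
Proof.
  intros H; induction n; simpl; [lra|].
  apply Rmult_le_compat; auto. left; apply poch_pos; lra.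
  pose proof (pos_INR n); lra. lra.
Qed.

Lemma Hsum_bound n j a b : 0 < b <= a -> (1 <= j)%nat ->
  Hsum n j a <= Hsum n 1 b / b ^ (j - 1).
Proof.
  intros Hb Hj. assert (0 < b ^ (j-1)) by (apply pow_lt; lra).
  induction n; simpl. unfold Rdiv; lra.
  unfold Rdiv. rewrite Rmult_plus_distr_r. apply Rplus_le_compat. exact IHn.
  pose proof (pos_INR n).
  rewrite <- Rinv_mult. apply Rinv_le_contravar.
  apply Rmult_lt_0_compat; [lra|auto].
  destruct j as [|j]; [lia|]. simpl. replace (j - 0)%nat with j by lia.
  rewrite Rmult_1_r. assert (0 < b ^ j) by (apply pow_lt; lra). apply Rmult_le_compat; try lra. apply pow_incr; lra.
Qed.

Definition cc (b : R) (j : nat) : R := INR (fact (j - 1)) / b ^ (j - 1).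

Lemma cc_nonneg b j : 0 < b -> 0 <= cc b j.
Proof.
  intros; unfold cc. apply Rle_mult_inv_pos. apply pos_INR. apply pow_lt; auto.
Qed.

Lemma vv_bound n a b j : 0 < b <= a -> (1 <= j)%nat ->
  Rabs (vv n a j) <= cc b j * (1 + Hsum n 1 b).
Proof.
  intros Hb Hj. unfold vv, cc.
  rewrite !Rabs_mult, pow_1_abs, Rabs_pos_eq by apply pos_INR.
  rewrite Rabs_pos_eq by (apply Hsum_nonneg; lra).
  assert (H := Hsum_bound n j a b Hb Hj).
  assert (0 < b ^ (j-1)) by (apply pow_lt; lra).
  assert (0 <= Hsum n 1 b) by (apply Hsum_nonneg; lra).
  assert (0 <= INR (fact (j-1))) by apply pos_INR.
  unfold Rdiv in *.
  apply Rle_trans with (INR (fact (j - 1)) * (Hsum n 1 b * / b ^ (j - 1))).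
  - rewrite Rmult_1_l. apply Rmult_le_compat_l; auto.
  - assert (0 < / b ^ (j-1)) by (apply Rinv_0_lt_compat; auto). nra.
Qed.

Definition AA (r : nat) (x b : R) (m : nat) : R :=
  / INR (S m) * (Rabs (poch x (S m)) / poch b (S m)) * (Yrec (cc b) r * (1 + Hsum (S m) 1 b) ^ r).

Lemma term_bound r x a b m : 0 < b <= a -> Rabs (term r x a m) <= AA r x b m.
Proof.
  intros Hb. rewrite term_Yrec. unfold AA.
  assert (HY := Yrec_bound (vv (S m) a) (cc b) (1 + Hsum (S m) 1 b)
     (fun j Hj => vv_bound (S m) a b j Hb Hj) (fun j => cc_nonneg b j ltac:(lra))
     ltac:(pose proof (Hsum_nonneg (S m) 1 b ltac:(lra)); lra) r).
  assert (0 < poch b (S m)) by (apply poch_pos; lra).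
  assert (Hpm := poch_mono b a (S m) Hb).
  assert (0 < INR (S m)) by (apply lt_0_INR; lia).
  rewrite !Rabs_mult, Rabs_inv, Rabs_pos_eq by lra.
  rewrite (Rabs_inv (poch a (S m))), (Rabs_pos_eq (poch a (S m))) by lra.
  unfold Rdiv. rewrite !Rmult_assoc. apply Rmult_le_compat_l. left; apply Rinv_0_lt_compat; lra.
  apply Rmult_le_compat_l. apply Rabs_pos.
  apply Rmult_le_compat; auto.
  left; apply Rinv_0_lt_compat; lra. apply Rabs_pos.
  apply Rinv_le_contravar; lra.
Qed.

Lemma ln_le_id z : 0 < z -> ln (1 + z) <= z.
Proof.
  intros Hz. rewrite <- (ln_exp z) at 2.
  destruct (Rle_lt_or_eq_dec _ _ (exp_ineq1_le z)) as [H|H].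
  - left; apply ln_increasing; lra.
  - rewrite H; lra.
Qed.

Lemma Hsum_ge_ln n b : 0 < b -> ln (INR n + b) - ln b <= Hsum n 1 b.
Proof.
  intros Hb. induction n. simpl. rewrite Rplus_0_l; lra.
  cbn [Hsum]. pose proof (pos_INR n).
  assert (E: ln (INR (S n) + b) = ln (INR n + b) + ln (1 + / (INR n + b))).
  { assert (0 < / (INR n + b)) by (apply Rinv_0_lt_compat; lra).
    rewrite <- ln_mult by lra.
    f_equal. rewrite S_INR. field. lra. }
  rewrite E. simpl pow. rewrite Rmult_1_r.
  assert (ln (1 + / (INR n + b)) <= / (INR n + b)) by (apply ln_le_id, Rinv_0_lt_compat; lra).
  lra.
Qed.

Lemma Hsum_unbounded b K : 0 < b -> exists N, forall n, (N <= n)%nat -> K <= Hsum n 1 b.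
Proof.
  intros Hb. destruct (INR_unbounded (exp (K + ln b))) as [N HN].
  exists N. intros n Hn. eapply Rle_trans; [|apply Hsum_ge_ln; auto].
  apply (le_INR N n) in Hn.
  assert (K + ln b < ln (INR n + b)).
  { rewrite <- (ln_exp (K + ln b)). apply ln_increasing. apply exp_pos. lra. }
  lra.
Qed.

Lemma pow_bound y r : 0 <= y -> (1 + y) ^ r * (1 - INR r * y) <= 1.
Proof.
  intros Hy. induction r. simpl; lra.
  rewrite S_INR. simpl pow.
  assert (0 <= (1+y)^r) by (apply pow_le; lra).
  assert (0 <= INR r) by apply pos_INR.
  assert ((1 + y) * (1 - (INR r + 1) * y) <= 1 - INR r * y) by nra.
  nra.
Qed.

Lemma raabe_bound (w c : nat -> R) beta N0 :
  0 < beta -> (forall n, 0 <= w n) -> (forall n, 0 <= c n) ->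
  (forall n, (N0 <= n)%nat -> c (S n) * w (S n) <= (c n - beta) * w n) ->
  forall k, beta * sum_f_R0 (fun i => w (N0 + i)%nat) k + c (N0 + S k)%nat * w (N0 + S k)%nat
     <= c N0 * w N0.
Proof.
  intros Hb Hw Hc H k. induction k.
  - simpl. rewrite Nat.add_0_r, Nat.add_1_r. specialize (H N0 (le_n _)). lra.
  - simpl sum_f_R0. specialize (H (N0 + S k)%nat ltac:(lia)).
    replace (N0 + S (S k))%nat with (S (N0 + S k)) by lia. lra.
Qed.

Lemma sum_shift_split (w : nat -> R) N0 k :
  sum_f_R0 w (N0 + k) + w N0 = sum_f_R0 w N0 + sum_f_R0 (fun i => w (N0 + i)%nat) k.
Proof.
  induction k. simpl. rewrite Nat.add_0_r. ring.
  replace (N0 + S k)%nat with (S (N0 + k)) by lia. rewrite !tech5.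
  replace (N0 + S k)%nat with (S (N0 + k)) by lia. lra.
Qed.

Lemma raabe_cv (w c : nat -> R) beta N0 :
  0 < beta -> (forall n, 0 <= w n) -> (forall n, 0 <= c n) ->
  (forall n, (N0 <= n)%nat -> c (S n) * w (S n) <= (c n - beta) * w n) ->
  { l | Un_cv (fun N => sum_f_R0 w N) l }.
Proof.
  intros Hb Hw Hc H. apply growing_cv.
  - intro n. simpl. specialize (Hw (S n)). lra.
  - exists (sum_f_R0 w N0 + c N0 * w N0 / beta). intros y [n ->].
    assert (0 <= c N0 * w N0 / beta).
    { apply Rle_mult_inv_pos; auto. apply Rmult_le_pos; auto. }
    destruct (le_lt_dec n N0).
    + assert (sum_f_R0 w n <= sum_f_R0 w N0).
      { clear -Hw l. induction l. lra. rewrite tech5. specialize (Hw (S m)). lra. }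
      lra.
    + assert (HR := raabe_bound w c beta N0 Hb Hw Hc H (n - N0)%nat).
      assert (HS := sum_shift_split w N0 (n - N0)%nat).
      replace (N0 + (n - N0))%nat with n in HS by lia.
      assert (0 <= c (N0 + S (n - N0))%nat * w (N0 + S (n - N0))%nat) by (apply Rmult_le_pos; auto).
      assert (beta * sum_f_R0 (fun i => w (N0 + i)%nat) (n - N0) <= c N0 * w N0) by lra.
      assert (sum_f_R0 (fun i => w (N0 + i)%nat) (n - N0) <= c N0 * w N0 / beta).
      { apply (Rmult_le_reg_l beta); auto. replace (beta * (c N0 * w N0 / beta)) with (c N0 * w N0) by (field; lra). lra. }
      specialize (Hw N0). lra.
Qed.

Lemma raabe_real (x b t M P K : R) r : 0 < b -> x < b -> b <= t -> 0 <= x + t -> 1 <= M ->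
  2 * INR r <= (b - x) * M -> 0 <= P -> 0 <= K ->
  P * (Rabs (x + t) / (b + t)) * K * (M + / (t + b) ^ 1) ^ r <=
  (1 - ((b - x) / 4) / t) * (P * K * M ^ r).
Proof.
  intros Hb Hx Ht Hxt HM Hr HP HK.
  rewrite Rabs_pos_eq by lra. simpl pow at 1. rewrite Rmult_1_r.
  set (tau := (b - x) / (b + t)).
  set (y := / ((t + b) * M)).
  assert (Htp : 0 < b + t) by lra.
  assert (Htau0 : 0 < tau) by (unfold tau; apply Rdiv_lt_0_compat; lra).
  assert (Htau1 : tau <= 1) by (unfold tau; apply Rmult_le_reg_r with (b + t); try lra;
      unfold Rdiv; rewrite Rmult_assoc, Rinv_l; lra).
  assert (E1 : (x + t) / (b + t) = 1 - tau) by (unfold tau; field; lra).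
  assert (Hy0 : 0 <= y) by (unfold y; left; apply Rinv_0_lt_compat; nra).
  assert (E2 : M + / (t + b) = M * (1 + y)) by (unfold y; field; split; lra).
  assert (Hry : INR r * y <= tau / 2).
  { unfold y, tau. apply Rmult_le_reg_r with (2 * ((t + b) * M)). nra.
    replace (INR r * / ((t + b) * M) * (2 * ((t + b) * M))) with (2 * INR r) by (field; split; lra).
    replace ((b - x) / (b + t) / 2 * (2 * ((t + b) * M))) with ((b - x) * M) by (field; lra).
    lra. }
  set (Q := (1 + y) ^ r).
  assert (HQ0 : 0 <= Q) by (apply pow_le; lra).
  assert (HQ1 : Q * (1 - INR r * y) <= 1) by apply pow_bound, Hy0.
  assert (HQ2 : Q * (1 - tau / 2) <= 1) by nra.
  assert (HQ3 : (1 - tau) * Q <= 1 - tau / 2).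
  { apply Rmult_le_reg_r with (1 - tau / 2). lra. nra. }
  assert (HQ4 : (1 - tau) * Q <= 1 - ((b - x) / 4) / t).
  { assert (tau/2 - (b-x)/4/t = (b-x)*(t-b)/(4*t*(b+t))) by (unfold tau; field; lra).
    assert (0 <= (b-x)*(t-b)/(4*t*(b+t))) by (apply Rle_mult_inv_pos; nra).
    lra. }
  rewrite E1, E2, Rpow_mult_distr. fold Q.
  assert (0 <= P * K * M ^ r) by (apply Rmult_le_pos; [apply Rmult_le_pos; auto| apply pow_le; lra]).
  replace (P * (1 - tau) * K * (M ^ r * Q)) with (((1 - tau) * Q) * (P * K * M ^ r)) by ring.
  apply Rmult_le_compat_r; auto.
Qed.

Lemma poch_S y n : poch y (S n) = poch y n * (y + INR n).
Proof. reflexivity. Qed.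

Lemma Hsum_S n j a : Hsum (S n) j a = Hsum n j a + / (INR n + a) ^ j.
Proof. reflexivity. Qed.

Lemma AA_nonneg r x b m : 0 < b -> 0 <= AA r x b m.
Proof.
  intros Hb. unfold AA.
  assert (0 < poch b (S m)) by (apply poch_pos; auto).
  assert (0 < INR (S m)) by (apply lt_0_INR; lia).
  apply Rmult_le_pos. apply Rmult_le_pos. left; apply Rinv_0_lt_compat; auto.
  apply Rle_mult_inv_pos; auto. apply Rabs_pos.
  apply Rmult_le_pos. apply Yrec_nonneg. intro; apply cc_nonneg; auto.
  apply pow_le. pose proof (Hsum_nonneg (S m) 1 b Hb); lra.
Qed.

Lemma AA_cv r x b : 0 < b -> x < b -> exists l, Un_cv (fun N => sum_f_R0 (AA r x b) N) l.
Proof.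
  intros Hb Hx.
  destruct (Hsum_unbounded b (2 * INR r / (b - x)) Hb) as [N1 HN1].
  destruct (INR_unbounded (b + Rabs x)) as [N2 HN2].
  assert (Hc : forall m, (Nat.max N1 N2 <= m)%nat ->
     INR (S (S m)) * AA r x b (S m) <= (INR (S m) - (b - x) / 4) * AA r x b m).
  { intros m Hm.
    set (t := INR (S m)). set (M := 1 + Hsum (S m) 1 b).
    set (P := Rabs (poch x (S m)) / poch b (S m)). set (K := Yrec (cc b) r).
    assert (Hpb : 0 < poch b (S m)) by (apply poch_pos; auto).
    assert (Ht0 : 0 < t) by (apply lt_0_INR; lia).
    assert (Htb : INR N2 <= t) by (apply le_INR; lia).
    assert (Habs := Rle_abs x). assert (Habs2 := Rle_abs (-x)). rewrite Rabs_Ropp in Habs2.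
    assert (E1 : INR (S (S m)) * AA r x b (S m) = P * (Rabs (x + t) / (b + t)) * K * (M + / (t + b)^1)^r).
    { unfold AA, P, K, M, t in *. rewrite (poch_S x (S m)), (poch_S b (S m)), (Hsum_S (S m)), Rabs_mult.
      assert (0 < INR (S (S m))) by (apply lt_0_INR; lia).
      assert (0 < b + INR (S m)) by lra.
      replace (1 + (Hsum (S m) 1 b + / (INR (S m) + b) ^ 1)) with
        (1 + Hsum (S m) 1 b + / (INR (S m) + b) ^ 1) by ring.
      field. repeat split; lra. }
    assert (E2 : (t - (b - x) / 4) * AA r x b m = (1 - ((b - x) / 4) / t) * (P * K * M ^ r)).
    { unfold AA, P, K, M, t in *. field. split; lra. }
    rewrite E1, E2. apply raabe_real; auto; try lra.
    - unfold M. pose proof (Hsum_nonneg (S m) 1 b Hb). lra.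
    - unfold M. assert (H := HN1 (S m) ltac:(lia)).
      assert (2 * INR r / (b - x) * (b - x) = 2 * INR r) by (field; lra). nra.
    - unfold P. apply Rle_mult_inv_pos; auto. apply Rabs_pos.
    - unfold K. apply Yrec_nonneg. intro; apply cc_nonneg; auto. }
  destruct (raabe_cv (AA r x b) (fun m => INR (S m)) ((b - x) / 4) (Nat.max N1 N2)) as [l Hl].
  - lra.
  - intro; apply AA_nonneg; auto.
  - intro; apply pos_INR.
  - exact Hc.
  - exists l; exact Hl.
Qed.

Lemma series_cv_dom (f A : nat -> R) : (forall n, Rabs (f n) <= A n) ->
  (exists l, Un_cv (fun N => sum_f_R0 A N) l) -> exists l, Un_cv (fun N => sum_f_R0 f N) l.
Proof.
  intros H [l Hl].
  assert (X : {l | Un_cv (fun N => sum_f_R0 A N) l}) by (exists l; auto).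
  destruct (Rseries_CV_comp (fun n => Rabs (f n)) A) as [la Hla].
  { intro n; split; [apply Rabs_pos| apply H]. }
  exact X.
  destruct (cv_cauchy_2 f (cauchy_abs f (cv_cauchy_1 _ (exist _ la Hla)))) as [lf Hlf].
  exists lf; auto.
Qed.

Lemma partial_diff (f A : nat -> R) n m : (n <= m)%nat -> (forall k, Rabs (f k) <= A k) ->
  Rabs (sum_f_R0 f m - sum_f_R0 f n) <= sum_f_R0 A m - sum_f_R0 A n.
Proof.
  intros H HA. induction H.
  - rewrite !Rminus_diag, Rabs_R0. lra.
  - rewrite !tech5.
    replace (sum_f_R0 f m + f (S m) - sum_f_R0 f n) with ((sum_f_R0 f m - sum_f_R0 f n) + f (S m)) by ring.
    eapply Rle_trans. apply Rabs_triang. specialize (HA (S m)). lra.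
Qed.

Lemma unif_tail (f : nat -> R -> R) (A : nat -> R) (D : R -> Prop) (g : R -> R) lA :
  (forall n y, D y -> Rabs (f n y) <= A n) -> (forall n, 0 <= A n) ->
  Un_cv (fun N => sum_f_R0 A N) lA ->
  (forall y, D y -> Un_cv (fun N => sum_f_R0 (fun n => f n y) N) (g y)) ->
  forall eps, 0 < eps -> exists N, forall n y, (N <= n)%nat -> D y ->
    Rabs (g y - sum_f_R0 (fun k => f k y) n) < eps.
Proof.
  intros Hb HA HlA Hg eps Heps.
  assert (Hgr : Un_growing (fun N => sum_f_R0 A N)).
  { intro n. simpl. specialize (HA (S n)). lra. }
  destruct (HlA (eps/2) ltac:(lra)) as [N HN].
  exists N. intros n y Hn Hy.
  destruct (Hg y Hy (eps/2) ltac:(lra)) as [N2 HN2].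
  set (m := Nat.max n N2).
  assert (H1 := HN2 m ltac:(unfold m; lia)). unfold Rdist in H1.
  assert (H2 := partial_diff (fun k => f k y) A n m ltac:(unfold m; lia) (fun k => Hb k y Hy)).
  assert (H3 := HN n Hn). unfold Rdist in H3.
  assert (H4 := growing_ineq _ _ Hgr HlA m).
  rewrite Rabs_minus_sym in H1.
  assert (Rabs (g y - sum_f_R0 (fun k => f k y) n) <=
     Rabs (g y - sum_f_R0 (fun k => f k y) m) + Rabs (sum_f_R0 (fun k => f k y) m - sum_f_R0 (fun k => f k y) n)).
  { replace (g y - sum_f_R0 (fun k => f k y) n) with
      ((g y - sum_f_R0 (fun k => f k y) m) + (sum_f_R0 (fun k => f k y) m - sum_f_R0 (fun k => f k y) n)) by ring.
    apply Rabs_triang. }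
  assert (Rabs (sum_f_R0 A n - lA) < eps / 2) by exact H3.
  apply Rabs_def2 in H0. lra.
Qed.

Definition Claim (Psi : nat -> R -> R) (x : R) (r : nat) : Prop :=
  forall a, 0 < a -> x < a ->
    Un_cv (fun N => sum_f_R0 (term r x a) N) (Psi r a - Psi r (a - x)).

Lemma Claim_step (Psi : nat -> R -> R) x r :
  (forall (r : nat) z, 0 < z -> derivable_pt_lim (Psi r) z (Psi (S r) z)) ->
  Claim Psi x r -> Claim Psi x (S r).
Proof.
  intros HPsi HC a Ha Hxa.
  set (lo := Rmax 0 x).
  assert (Hlo0 : 0 <= lo) by apply Rmax_l.
  assert (Hlox : x <= lo) by apply Rmax_r.
  assert (Halo : lo < a) by (unfold lo; apply Rmax_lub_lt; auto).
  assert (Hdp : 0 < (a - lo) / 2) by lra.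
  set (d := mkposreal _ Hdp).
  set (b := lo + (a - lo) / 2).
  assert (Hb0 : 0 < b) by (unfold b; lra).
  assert (Hbx : x < b) by (unfold b; lra).
  assert (HbD : forall y, Boule a d y -> b <= y /\ 0 < y /\ x < y).
  { intros y Hy. unfold Boule in Hy. simpl in Hy. apply Rabs_def2 in Hy. unfold b. lra. }
  set (f := fun N y => sum_f_R0 (term r x y) N).
  set (f' := fun N y => sum_f_R0 (term (S r) x y) N).
  set (g := fun y => Psi r y - Psi r (y - x)).
  assert (Hex : forall y, exists l, Boule a d y -> Un_cv (fun N => f' N y) l).
  { intro y. destruct (classic (Boule a d y)) as [Hy|Hy].
    - destruct (HbD y Hy) as [H1 [H2 H3]].
      destruct (series_cv_dom (term (S r) x y) (AA (S r) x b)) as [l Hl].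
      + intro n. apply term_bound. lra.
      + apply AA_cv; auto.
      + exists l; intros _; exact Hl.
    - exists 0; intro H; contradiction. }
  set (g' := fun y => proj1_sig (constructive_indefinite_description _ (Hex y))).
  assert (Hg' : forall y, Boule a d y -> Un_cv (fun N => f' N y) (g' y)).
  { intros y Hy. unfold g'. destruct (constructive_indefinite_description _ (Hex y)) as [l Hl]. simpl. auto. }
  assert (Hcvu : CVU f' g' a d).
  { intros eps Heps.
    destruct (AA_cv (S r) x b Hb0 Hbx) as [lA HlA].
    destruct (unif_tail (fun n y => term (S r) x y n) (AA (S r) x b) (Boule a d) g' lA) with (eps := eps)
      as [N HN]; auto.
    - intros n y Hy. destruct (HbD y Hy) as [H1 [H2 H3]]. apply term_bound. lra.
    - intro; apply AA_nonneg; auto.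
    - exists N. intros n y Hn Hy. apply HN; auto. }
  assert (Hder : derivable_pt_lim g a (g' a)).
  { apply (CVU_derivable f f' g g' a d Hcvu).
    - intros y Hy. destruct (HbD y Hy) as [H1 [H2 H3]]. apply HC; auto.
    - intros n y Hy. destruct (HbD y Hy) as [H1 [H2 H3]]. unfold f, f'.
      apply (dsum (fun k y => term r x y k)). intros k _. apply term_deriv; auto.
    - apply Boule_center. }
  assert (Hder2 : derivable_pt_lim g a (Psi (S r) a - Psi (S r) (a - x))).
  { unfold g. apply dminus. apply HPsi; auto.
    apply (dlim_eq _ _ (Psi (S r) (a - x) * (1 - 0))). ring.
    apply (dcomp (fun y => y - x) (Psi r)). apply dminus. apply did. apply dconst.
    apply HPsi. lra. }
  rewrite <- (uniqueness_limite g a _ _ Hder Hder2).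
  apply Hg'. apply Boule_center.
Qed.

Lemma ln_le_w w : -1 < w -> ln (1 + w) <= w.
Proof.
  intros Hw. rewrite <- (ln_exp w) at 2.
  destruct (Rle_lt_or_eq_dec _ _ (exp_ineq1_le w)) as [H|H].
  - left; apply ln_increasing; lra.
  - rewrite H; lra.
Qed.

Lemma ln_ge y : 0 <= y -> y / (1 + y) <= ln (1 + y).
Proof.
  intros Hy.
  assert (E : ln (1 + y) = - ln (1 + - (y / (1 + y)))).
  { replace (1 + - (y / (1 + y))) with (/ (1 + y)) by (field; lra).
    rewrite ln_Rinv by lra. ring. }
  rewrite E. assert (ln (1 + - (y / (1 + y))) <= - (y / (1 + y))).
  { apply ln_le_w. assert (y / (1 + y) < 1).
    { apply Rmult_lt_reg_r with (1 + y); try lra. unfold Rdiv; rewrite Rmult_assoc, Rinv_l; lra. }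
    lra. }
  lra.
Qed.

Definition ell (z : R) (n : nat) : R :=
  ln (INR (fact n)) + z * ln (INR n) - sum_f_R0 (fun k => ln (z + INR k)) n.
Definition hh (z : R) (n : nat) : R :=
  ln (INR n) - sum_f_R0 (fun k => / (z + INR k)) n.

Lemma prod_shift_exp z n : 0 < z -> prod_shift z n = exp (sum_f_R0 (fun k => ln (z + INR k)) n).
Proof.
  intros Hz. induction n.
  - simpl. rewrite Rplus_0_r, exp_ln; auto.
  - rewrite tech5, exp_plus, <- IHn. rewrite exp_ln. reflexivity.
    pose proof (pos_INR (S n)); lra.
Qed.

Lemma gauss_exp z n : 0 < z -> gauss_seq z n = exp (ell z n).
Proof.
  intros Hz. unfold gauss_seq, ell, Rpower. rewrite prod_shift_exp by auto.
  unfold Rminus. rewrite !exp_plus, exp_Ropp, exp_ln by (apply INR_fact_lt_0).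
  unfold Rdiv. reflexivity.
Qed.

Lemma ell_diff z n : 0 < z -> (1 <= n)%nat ->
  ell z (S n) - ell z n = z * ln (1 + / INR n) - ln (1 + z / INR (S n)).
Proof.
  intros Hz Hn.
  assert (Hn0 : 0 < INR n) by (apply lt_0_INR; lia).
  assert (HSn : 0 < INR (S n)) by (apply lt_0_INR; lia).
  assert (E1 : ln (INR (fact (S n))) = ln (INR (S n)) + ln (INR (fact n))).
  { rewrite fact_simpl, mult_INR, ln_mult; auto. apply INR_fact_lt_0. }
  assert (E2 : ln (INR (S n)) = ln (INR n) + ln (1 + / INR n)).
  { rewrite <- ln_mult; auto. f_equal. rewrite S_INR. field. lra.
    assert (0 < / INR n) by (apply Rinv_0_lt_compat; auto). lra. }
  assert (E3 : ln (z + INR (S n)) = ln (INR (S n)) + ln (1 + z / INR (S n))).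
  { rewrite <- ln_mult; auto. f_equal. field. lra.
    assert (0 < z / INR (S n)) by (apply Rdiv_lt_0_compat; auto). lra. }
  unfold ell. rewrite tech5, E1, E3. rewrite E2 at 2. ring.
Qed.

Lemma ell_diff_bounds z n : 0 < z -> (1 <= n)%nat ->
  0 <= ell z (S n) - ell z n <= z * (1 + z) * (/ INR n - / INR (S n)).
Proof.
  intros Hz Hn. rewrite ell_diff by auto.
  assert (Hn0 : 0 < INR n) by (apply lt_0_INR; lia).
  assert (HSn : INR (S n) = INR n + 1) by apply S_INR.
  assert (H1 := ln_ge (/ INR n) ltac:(left; apply Rinv_0_lt_compat; auto)).
  assert (H2 := ln_le_w (/ INR n) ltac:(assert (0 < / INR n) by (apply Rinv_0_lt_compat; auto); lra)).
  assert (Hzn : 0 <= z / INR (S n)) by (left; apply Rdiv_lt_0_compat; lra).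
  assert (H3 := ln_ge (z / INR (S n)) Hzn).
  assert (H4 := ln_le_w (z / INR (S n)) ltac:(lra)).
  assert (E5 : / INR n / (1 + / INR n) = / INR (S n)) by (rewrite HSn; field; lra).
  assert (E6 : z / INR (S n) / (1 + z / INR (S n)) = z / (INR n + 1 + z)) by (rewrite HSn; field; lra).
  rewrite E5 in H1. rewrite E6 in H3.
  split.
  - assert (z / INR (S n) = z * / INR (S n)) by reflexivity. nra.
  - assert (z * / INR n - z / (INR n + 1 + z) = z * (1 + z) / (INR n * (INR n + 1 + z))) by (field; lra).
    assert (z * (1 + z) / (INR n * (INR n + 1 + z)) <= z * (1 + z) * (/ INR n - / INR (S n))).
    { rewrite HSn. replace (/ INR n - / (INR n + 1)) with (/ (INR n * (INR n + 1))) by (field; lra).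
      unfold Rdiv. apply Rmult_le_compat_l. nra. apply Rinv_le_contravar; nra. }
    nra.
Qed.

Lemma cv_shift (u : nat -> R) l : Un_cv (fun n => u (S n)) l -> Un_cv u l.
Proof.
  intros H eps He. destruct (H eps He) as [N HN]. exists (S N). intros n Hn.
  destruct n; [lia|]. apply HN; lia.
Qed.

Lemma ell_cv z : 0 < z -> exists l, Un_cv (ell z) l.
Proof.
  intros Hz.
  assert (Hg : Un_growing (fun n => ell z (S n))).
  { intro n. assert (H := ell_diff_bounds z (S n) Hz ltac:(lia)). lra. }
  assert (Hb : forall n, ell z (S n) + z * (1 + z) * / INR (S n) <= ell z 1 + z * (1 + z)).
  { induction n.
    - simpl. rewrite Rinv_1. lra.
    - assert (H := ell_diff_bounds z (S n) Hz ltac:(lia)). lra. }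
  destruct (growing_cv _ Hg) as [l Hl].
  - exists (ell z 1 + z * (1 + z)). intros y [n ->]. specialize (Hb n).
    assert (0 <= z * (1 + z) * / INR (S n)).
    { apply Rmult_le_pos. nra. left; apply Rinv_0_lt_compat, lt_0_INR; lia. }
    lra.
  - exists l. apply cv_shift; auto.
Qed.

Lemma ln_S_le_harm m : ln (INR (S (S m))) <= sum_f_R0 (fun k => / (1 + INR k)) m.
Proof.
  induction m.
  - simpl. replace (1 + 1) with (1 + / 1) by (field). rewrite Rinv_1, Rplus_0_r.
    apply Rle_trans with 1. apply ln_le_w; lra. lra.
  - assert (E : ln (INR (S (S (S m)))) = ln (INR (S (S m))) + ln (1 + / INR (S (S m)))).
    { assert (0 < INR (S (S m))) by (apply lt_0_INR; lia).
      assert (0 < / INR (S (S m))) by (apply Rinv_0_lt_compat; auto).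
      rewrite <- ln_mult by lra. f_equal. rewrite (S_INR (S (S m))). field. lra. }
    rewrite E, tech5.
    assert (ln (1 + / INR (S (S m))) <= / INR (S (S m))).
    { apply ln_le_w. assert (0 < / INR (S (S m))) by (apply Rinv_0_lt_compat, lt_0_INR; lia). lra. }
    replace (1 + INR (S m)) with (INR (S (S m))) by (rewrite (S_INR (S m)); ring).
    lra.
Qed.

Lemma e_cv : exists E, Un_cv (hh 1) E.
Proof.
  assert (Hg : Un_growing (fun n => hh 1 (S n))).
  { intro n. unfold hh. rewrite (tech5 _ (S n)).
    assert (E : ln (INR (S (S n))) = ln (INR (S n)) + ln (1 + / INR (S n))).
    { assert (0 < INR (S n)) by (apply lt_0_INR; lia).
      assert (0 < / INR (S n)) by (apply Rinv_0_lt_compat; auto).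
      rewrite <- ln_mult by lra. f_equal. rewrite (S_INR (S n)). field. lra. }
    rewrite E.
    assert (H := ln_ge (/ INR (S n)) ltac:(left; apply Rinv_0_lt_compat, lt_0_INR; lia)).
    assert (0 < INR (S n)) by (apply lt_0_INR; lia).
    replace (/ INR (S n) / (1 + / INR (S n))) with (/ (1 + INR (S n))) in H by (field; lra).
    assert (/ (1 + INR (S (S n))) <= / (1 + INR (S n))).
    { apply Rinv_le_contravar. lra. rewrite (S_INR (S n)). lra. }
    lra. }
  destruct (growing_cv _ Hg) as [l Hl].
  - exists 0. intros y [n ->]. unfold hh.
    assert (H := ln_S_le_harm n).
    assert (ln (INR (S n)) <= ln (INR (S (S n)))).
    { destruct n. simpl. rewrite ln_1. left. replace (1+1) with 2 by ring.
      apply Rlt_trans with (/2). lra. apply ln_lt_2.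
      left; apply ln_increasing. apply lt_0_INR; lia. apply lt_INR; lia. }
    rewrite tech5.
    assert (0 < / (1 + INR (S n))) by (apply Rinv_0_lt_compat; pose proof (pos_INR (S n)); lra).
    lra.
  - exists l. apply cv_shift; auto.
Qed.

Lemma choose_lim (P : R -> Prop) (s : R -> nat -> R) :
  (forall y, P y -> exists l, Un_cv (s y) l) -> { g : R -> R | forall y, P y -> Un_cv (s y) (g y) }.
Proof.
  intros H.
  assert (Hex : forall y, exists l, P y -> Un_cv (s y) l).
  { intro y. destruct (classic (P y)) as [Hy|Hy].
    - destruct (H y Hy) as [l Hl]. exists l; auto.
    - exists 0; intro; contradiction. }
  exists (fun y => proj1_sig (constructive_indefinite_description _ (Hex y))).
  intros y Hy. destruct (constructive_indefinite_description _ (Hex y)) as [l Hl]. simpl. auto.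
Qed.

Lemma cv_ext (u v : nat -> R) l : (forall n, u n = v n) -> Un_cv u l -> Un_cv v l.
Proof. intros H Hu eps He. destruct (Hu eps He) as [N HN]. exists N. intros n Hn. rewrite <- H. auto. Qed.

Lemma cv_const c : Un_cv (fun _ => c) c.
Proof. intros eps He. exists 0%nat. intros. unfold Rdist. rewrite Rminus_diag, Rabs_R0. lra. Qed.

Lemma cv_scal (A : nat -> R) c l : Un_cv (fun N => sum_f_R0 A N) l ->
  Un_cv (fun N => sum_f_R0 (fun k => c * A k) N) (c * l).
Proof.
  intros H. apply (cv_ext (fun N => c * sum_f_R0 A N)). intro; apply sum_scal_l.
  apply CV_mult; auto. apply cv_const.
Qed.

Lemma sq_cv : exists l, Un_cv (fun N => sum_f_R0 (fun k => / (INR k + 1) ^ 2) N) l.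
Proof.
  destruct (raabe_cv (fun k => / (INR k + 1) ^ 2) (fun k => INR k + 1) (1/2) 0) as [l Hl].
  - lra.
  - intro. left. apply Rinv_0_lt_compat, pow_lt. pose proof (pos_INR n); lra.
  - intro. pose proof (pos_INR n); lra.
  - intros n _. rewrite S_INR. pose proof (pos_INR n).
    replace ((INR n + 1 + 1) * / (INR n + 1 + 1) ^ 2) with (/ (INR n + 2)) by (field; lra).
    replace ((INR n + 1 - 1/2) * / (INR n + 1) ^ 2) with ((INR n + 1/2) / (INR n + 1) ^ 2) by (field; lra).
    apply Rmult_le_reg_r with ((INR n + 2) * (INR n + 1) ^ 2). nra.
    replace (/ (INR n + 2) * ((INR n + 2) * (INR n + 1) ^ 2)) with ((INR n + 1) ^ 2) by (field; lra).
    replace ((INR n + 1 / 2) / (INR n + 1) ^ 2 * ((INR n + 2) * (INR n + 1) ^ 2)) with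
      ((INR n + 1/2) * (INR n + 2)) by (field; lra).
    nra.
  - exists l; auto.
Qed.

Definition uu (k : nat) (y : R) : R := / (1 + INR k) - / (y + INR k).

Lemma hh_split y n : hh y n = hh 1 n + sum_f_R0 (fun k => uu k y) n.
Proof. unfold hh, uu. rewrite minus_sum. ring. Qed.

Lemma uu_bound k y m0 M0 : 0 < m0 <= y -> y <= M0 ->
  Rabs (uu k y) <= (M0 + 1) / Rmin m0 1 * / (INR k + 1) ^ 2.
Proof.
  intros Hy HM. unfold uu.
  set (mu := Rmin m0 1).
  assert (Hmu0 : 0 < mu) by (unfold mu; apply Rmin_glb_lt; lra).
  assert (Hmu1 : mu <= m0) by apply Rmin_l. assert (Hmu2 : mu <= 1) by apply Rmin_r.
  pose proof (pos_INR k).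
  assert (Hyk : mu * (INR k + 1) <= y + INR k) by nra.
  replace (/ (1 + INR k) - / (y + INR k)) with ((y - 1) / ((INR k + 1) * (y + INR k))) by (field; lra).
  unfold Rdiv. rewrite Rabs_mult, Rabs_inv, (Rabs_pos_eq ((INR k + 1) * (y + INR k))) by nra.
  replace ((M0 + 1) * / mu * / (INR k + 1) ^ 2) with ((M0 + 1) * / (mu * (INR k + 1) * (INR k + 1))) by (field; lra).
  apply Rmult_le_compat. apply Rabs_pos. left; apply Rinv_0_lt_compat; nra.
  apply Rabs_le; lra.
  apply Rinv_le_contravar. nra. nra.
Qed.

Lemma deriv_local f g x l d : 0 < d -> (forall y, Rabs (y - x) < d -> f y = g y) ->
  derivable_pt_lim f x l -> derivable_pt_lim g x l.
Proof.
  intros Hd Heq H eps He. destruct (H eps He) as [del Hdel].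
  assert (Hm : 0 < Rmin del d) by (apply Rmin_glb_lt; [apply cond_pos| auto]).
  exists (mkposreal _ Hm). intros h Hh Hlt. simpl in Hlt.
  assert (Rabs h < del) by (eapply Rlt_le_trans; [exact Hlt| apply Rmin_l]).
  assert (Rabs h < d) by (eapply Rlt_le_trans; [exact Hlt| apply Rmin_r]).
  rewrite <- (Heq (x + h)), <- (Heq x). apply Hdel; auto.
  rewrite Rminus_diag, Rabs_R0; auto.
  replace (x + h - x) with h by ring. auto.
Qed.

Lemma ell_deriv n y0 : 0 < y0 -> derivable_pt_lim (fun y => ell y n) y0 (hh y0 n).
Proof.
  intros Hy. unfold ell, hh.
  apply (dlim_eq _ _ (0 + (1 * ln (INR n) + y0 * 0) - sum_f_R0 (fun k => / (y0 + INR k) * (1 + 0)) n)).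
  { rewrite (sum_eq _ (fun k => / (y0 + INR k))) by (intros; ring). ring. }
  apply dminus. apply dplus. apply dconst.
  apply (dmul (fun y => y) (fun _ => ln (INR n))). apply did. apply dconst.
  apply (dsum (fun k y => ln (y + INR k))). intros k _.
  apply (dcomp (fun y => y + INR k) ln). apply dplus. apply did. apply dconst.
  apply derivable_pt_lim_ln. pose proof (pos_INR k); lra.
Qed.

Lemma Psi0_lim (G : R -> R) (Psi : nat -> R -> R) :
  (forall z, 0 < z -> Un_cv (gauss_seq z) (G z)) ->
  (forall z, 0 < z -> derivable_pt_lim G z (Psi 0%nat z * G z)) ->
  forall z0, 0 < z0 -> Un_cv (hh z0) (Psi 0%nat z0).
Proof.
  intros HG HdG z0 Hz0.
  destruct e_cv as [E HE].
  destruct (choose_lim (fun y => 0 < y) ell ell_cv) as [L HL].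
  assert (HGL : forall y, 0 < y -> G y = exp (L y)).
  { intros y Hy. apply (UL_sequence (gauss_seq y)). apply HG; auto.
    apply (cv_ext (fun n => exp (ell y n))). intro; rewrite gauss_exp; auto.
    apply (continuity_seq exp). apply derivable_continuous_pt.
    exists (exp (L y)). apply derivable_pt_lim_exp. apply HL; auto. }
  assert (Hdp : 0 < z0 / 2) by lra.
  set (d := mkposreal _ Hdp).
  assert (HD : forall y, Boule z0 d y -> z0 / 2 <= y <= 3 * z0 / 2).
  { intros y Hy. unfold Boule in Hy; simpl in Hy. apply Rabs_def2 in Hy. lra. }
  set (C := (3 * z0 / 2 + 1) / Rmin (z0 / 2) 1).
  assert (HC : 0 <= C).
  { unfold C. apply Rle_mult_inv_pos. lra. apply Rmin_glb_lt; lra. }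
  destruct sq_cv as [lq Hlq].
  assert (HA : Un_cv (fun N => sum_f_R0 (fun k => C * / (INR k + 1) ^ 2) N) (C * lq)) by (apply cv_scal; auto).
  assert (Hub : forall n y, Boule z0 d y -> Rabs (uu n y) <= C * / (INR n + 1) ^ 2).
  { intros n y Hy. destruct (HD y Hy). unfold C. apply uu_bound; lra. }
  assert (HA0 : forall n, 0 <= C * / (INR n + 1) ^ 2).
  { intro n. apply Rmult_le_pos; auto. left; apply Rinv_0_lt_compat, pow_lt. pose proof (pos_INR n); lra. }
  destruct (choose_lim (Boule z0 d) (fun y N => sum_f_R0 (fun k => uu k y) N)) as [U HU].
  { intros y Hy. apply (series_cv_dom (fun k => uu k y) (fun k => C * / (INR k + 1) ^ 2)).
    intro; apply Hub; auto. exists (C * lq); auto. }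
  assert (Hcvu : CVU (fun n y => hh y n) (fun y => E + U y) z0 d).
  { intros eps Heps.
    destruct (HE (eps / 2) ltac:(lra)) as [N1 HN1].
    destruct (unif_tail (fun k y => uu k y) (fun k => C * / (INR k + 1) ^ 2) (Boule z0 d) U (C * lq)
       Hub HA0 HA HU (eps / 2) ltac:(lra)) as [N2 HN2].
    exists (Nat.max N1 N2). intros n y Hn Hy.
    rewrite hh_split.
    assert (H1 := HN1 n ltac:(lia)). unfold Rdist in H1.
    assert (H2 := HN2 n y ltac:(lia) Hy).
    replace (E + U y - (hh 1 n + sum_f_R0 (fun k => uu k y) n)) with
      ((U y - sum_f_R0 (fun k => uu k y) n) + - (hh 1 n - E)) by ring.
    eapply Rle_lt_trans. apply Rabs_triang. rewrite Rabs_Ropp. lra. }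
  assert (HdL : derivable_pt_lim L z0 (E + U z0)).
  { apply (CVU_derivable (fun n y => ell y n) (fun n y => hh y n) L (fun y => E + U y) z0 d Hcvu).
    - intros y Hy. destruct (HD y Hy). apply HL. lra.
    - intros n y Hy. destruct (HD y Hy). apply ell_deriv. lra.
    - apply Boule_center. }
  assert (Hdexp : derivable_pt_lim (fun y => exp (L y)) z0 (exp (L z0) * (E + U z0))).
  { apply (dcomp L exp). auto. apply derivable_pt_lim_exp. }
  assert (HdG2 : derivable_pt_lim G z0 (exp (L z0) * (E + U z0))).
  { apply (deriv_local (fun y => exp (L y)) G z0 _ z0 Hz0); auto.
    intros y Hy. apply Rabs_def2 in Hy. symmetry. apply HGL. lra. }
  assert (Heq := uniqueness_limite G z0 _ _ (HdG z0 Hz0) HdG2).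
  rewrite HGL in Heq by auto.
  assert (Hpsi : Psi 0%nat z0 = E + U z0).
  { apply Rmult_eq_reg_r with (exp (L z0)). rewrite Heq. ring. apply exp_neq_0. }
  rewrite Hpsi.
  apply (cv_ext (fun n => hh 1 n + sum_f_R0 (fun k => uu k z0) n)). intro; symmetry; apply hh_split.
  apply CV_plus; auto. apply HU. apply Boule_center.
Qed.

Lemma term0_eq x a m : term 0 x a m = / INR (S m) * (poch x (S m) / poch a (S m)).
Proof. rewrite term_Yrec. unfold Yrec. simpl Yf. unfold Rdiv. ring. Qed.

Lemma poch_shift1 a n : a * poch (a + 1) n = poch a (S n).
Proof.
  induction n. simpl. ring.
  rewrite (poch_S (a+1) n), (poch_S a (S n)), <- IHn, S_INR. ring.
Qed.

Lemma term0_diff x a m : 0 < a ->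
  term 0 x a m - term 0 x (a + 1) m = poch x (S m) / poch a (S (S m)).
Proof.
  intros Ha. rewrite !term0_eq.
  assert (E : poch (a + 1) (S m) = poch a (S (S m)) / a).
  { rewrite <- (poch_shift1 a (S m)). field. lra. }
  rewrite E. rewrite (poch_S a (S m)).
  assert (0 < poch a (S m)) by (apply poch_pos; auto).
  assert (0 < INR (S m)) by (apply lt_0_INR; lia).
  field. repeat split; try lra.
Qed.

Lemma telescope x a N : 0 < a -> x < a ->
  sum_f_R0 (fun m => poch x (S m) / poch a (S (S m))) N =
  (x / a - poch x (S (S N)) / poch a (S (S N))) / (a - x).
Proof.
  intros Ha Hx.
  assert (Ht : forall n, poch x n / poch a (S n) = (poch x n / poch a n - poch x (S n) / poch a (S n)) / (a - x)).
  { intro n. rewrite (poch_S x n), (poch_S a n).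
    assert (0 < poch a n) by (apply poch_pos; auto). pose proof (pos_INR n).
    field. repeat split; lra. }
  induction N.
  - unfold sum_f_R0. rewrite (Ht (S 0)). simpl poch. field. split; lra.
  - rewrite tech5, IHN, (Ht (S (S N))). assert (0 < poch a (S (S N))) by (apply poch_pos; auto). assert (0 < poch a (S (S (S N)))) by (apply poch_pos; auto). field. repeat split; lra.
Qed.

Lemma poch_ratio_cv x a : 0 < a -> x < a -> Un_cv (fun n => poch x n / poch a n) 0.
Proof.
  intros Ha Hx.
  destruct (INR_unbounded (Rabs x)) as [N0 HN0].
  set (d := a - x).
  set (p := fun n => Rabs (poch x n / poch a n)).
  assert (Hkey : forall k, p (N0 + k)%nat * (1 + d * (Hsum (N0 + k) 1 a - Hsum N0 1 a)) <= p N0).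
  { induction k.
    - rewrite Nat.add_0_r. unfold Rminus. rewrite Rplus_opp_r, Rmult_0_r, Rplus_0_r, Rmult_1_r. lra.
    - replace (N0 + S k)%nat with (S (N0 + k)) by lia.
      set (n := (N0 + k)%nat) in *.
      assert (Hn : INR N0 <= INR n) by (apply le_INR; unfold n; lia).
      assert (Habs := Rle_abs (-x)). rewrite Rabs_Ropp in Habs.
      assert (Hpa : 0 < poch a n) by (apply poch_pos; auto).
      pose proof (pos_INR n).
      assert (Ep : p (S n) = p n * ((x + INR n) / (a + INR n))).
      { unfold p. rewrite (poch_S x n), (poch_S a n).
        replace (poch x n * (x + INR n) / (poch a n * (a + INR n))) with
          (poch x n / poch a n * ((x + INR n) / (a + INR n))) by (field; lra).
        rewrite Rabs_mult, (Rabs_pos_eq ((x + INR n) / (a + INR n))); auto.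
        apply Rle_mult_inv_pos; lra. }
      assert (EH : Hsum (S n) 1 a = Hsum n 1 a + / (a + INR n)).
      { rewrite Hsum_S. simpl pow. rewrite Rmult_1_r, (Rplus_comm (INR n) a). reflexivity. }
      rewrite Ep, EH.
      set (Sn := 1 + d * (Hsum n 1 a - Hsum N0 1 a)).
      assert (HS1 : 1 <= Sn).
      { unfold Sn. assert (Hsum N0 1 a <= Hsum n 1 a) by (apply Hsum_incr; auto; unfold n; lia).
        unfold d. nra. }
      set (t := d / (a + INR n)).
      assert (Et : (x + INR n) / (a + INR n) = 1 - t) by (unfold t, d; field; lra).
      assert (Ht0 : 0 <= t) by (unfold t, d; apply Rle_mult_inv_pos; lra).
      assert (Ht1 : t <= 1) by (unfold t, d; apply Rmult_le_reg_r with (a + INR n); try lra;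
          unfold Rdiv; rewrite Rmult_assoc, Rinv_l; lra).
      replace (1 + d * (Hsum n 1 a + / (a + INR n) - Hsum N0 1 a)) with (Sn + t) by (unfold Sn, t; field; lra).
      rewrite Et.
      assert (0 <= p n) by (unfold p; apply Rabs_pos).
      assert ((1 - t) * (Sn + t) <= Sn) by nra.
      replace (p n * (1 - t) * (Sn + t)) with (p n * ((1 - t) * (Sn + t))) by ring.
      eapply Rle_trans; [| exact IHk]. fold n. apply Rmult_le_compat_l; auto. }
  intros eps Heps.
  assert (Hd : 0 < d) by (unfold d; lra).
  destruct (Hsum_unbounded a (Hsum N0 1 a + p N0 / (eps * d)) Ha) as [N1 HN1].
  exists (Nat.max N0 N1). intros n Hn. unfold Rdist. rewrite Rminus_0_r. fold (p n).
  specialize (Hkey (n - N0)%nat). replace (N0 + (n - N0))%nat with n in Hkey by lia.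
  specialize (HN1 n ltac:(lia)).
  assert (0 <= p n) by (unfold p; apply Rabs_pos).
  assert (0 <= p N0) by (unfold p; apply Rabs_pos).
  assert (d * (Hsum n 1 a - Hsum N0 1 a) >= p N0 / eps).
  { apply Rle_ge. apply Rmult_le_reg_r with (/ d). apply Rinv_0_lt_compat; auto.
    replace (p N0 / eps * / d) with (p N0 / (eps * d)) by (field; lra).
    replace (d * (Hsum n 1 a - Hsum N0 1 a) * / d) with (Hsum n 1 a - Hsum N0 1 a) by (field; lra).
    lra. }
  assert (p n * (p N0 / eps) < p N0 + eps \/ p n < eps).
  { destruct (Rlt_or_le (p n) eps); auto. left. nra. }
  destruct H2; auto.
  assert (p n * (1 + p N0 / eps) <= p N0) by nra.
  apply Rmult_lt_reg_r with (1 + p N0 / eps).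
  assert (0 <= p N0 / eps) by (apply Rle_mult_inv_pos; auto). lra.
  replace (eps * (1 + p N0 / eps)) with (eps + p N0) by (field; lra). lra.
Qed.

Lemma poch_shift_bound a c m : 0 < a -> 0 <= c -> (a + c) * poch a (S m) <= a * poch (a + c) (S m).
Proof.
  intros Ha Hc. induction m.
  - simpl. lra.
  - rewrite (poch_S a (S m)), (poch_S (a + c) (S m)).
    assert (0 < poch a (S m)) by (apply poch_pos; auto).
    pose proof (pos_INR (S m)).
    replace ((a + c) * (poch a (S m) * (a + INR (S m)))) with (((a + c) * poch a (S m)) * (a + INR (S m))) by ring.
    replace (a * (poch (a + c) (S m) * (a + c + INR (S m)))) with ((a * poch (a + c) (S m)) * (a + c + INR (S m))) by ring.
    apply Rmult_le_compat; try lra. nra.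
Qed.

Lemma cv_shift_fwd (u : nat -> R) l : Un_cv u l -> Un_cv (fun n => u (S n)) l.
Proof. intros H eps He. destruct (H eps He) as [N HN]. exists N. intros n Hn. apply HN; lia. Qed.

Lemma SS_bound x a c LA N : 0 < a -> x < a -> 0 <= c ->
  Un_cv (fun N => sum_f_R0 (AA 0 x a) N) LA ->
  Rabs (sum_f_R0 (term 0 x (a + c)) N) <= a / (a + c) * LA.
Proof.
  intros Ha Hx Hc HLA.
  eapply Rle_trans. apply Rsum_abs.
  assert (Hgr : Un_growing (fun N => sum_f_R0 (AA 0 x a) N)).
  { intro n. simpl. pose proof (AA_nonneg 0 x a (S n) Ha). lra. }
  assert (H1 := growing_ineq _ _ Hgr HLA N).
  assert (0 <= a / (a + c)) by (apply Rle_mult_inv_pos; lra).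
  eapply Rle_trans; [| apply Rmult_le_compat_l; [auto| exact H1]].
  rewrite sum_scal_l. apply sum_Rle. intros m _.
  rewrite term0_eq. unfold AA. simpl Yrec. unfold Yrec; simpl Yf. simpl pow.
  assert (0 < poch a (S m)) by (apply poch_pos; auto).
  assert (0 < poch (a + c) (S m)) by (apply poch_pos; lra).
  assert (0 < INR (S m)) by (apply lt_0_INR; lia).
  assert (Hpb := poch_shift_bound a c m Ha Hc).
  unfold Rdiv. rewrite !Rabs_mult, Rabs_inv, (Rabs_pos_eq (INR (S m))) by lra.
  rewrite Rabs_inv, (Rabs_pos_eq (poch (a + c) (S m))) by lra.
  assert (0 <= Rabs (poch x (S m))) by apply Rabs_pos.
  assert (/ poch (a + c) (S m) <= a * / (a + c) * / poch a (S m)).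
  { apply Rmult_le_reg_r with (poch (a + c) (S m) * ((a + c) * poch a (S m))). 
    apply Rmult_lt_0_compat; auto. apply Rmult_lt_0_compat; lra.
    replace (/ poch (a + c) (S m) * (poch (a + c) (S m) * ((a + c) * poch a (S m)))) with ((a + c) * poch a (S m)) by (field; lra).
    replace (a * / (a + c) * / poch a (S m) * (poch (a + c) (S m) * ((a + c) * poch a (S m)))) with (a * poch (a + c) (S m)) by (field; lra).
    lra. }
  assert (0 < / INR (S m)) by (apply Rinv_0_lt_compat; lra).
  replace (a * / (a + c) * (/ INR (S m) * (Rabs (poch x (S m)) * / poch a (S m)) * (1 * 1)))
    with (/ INR (S m) * Rabs (poch x (S m)) * (a * / (a + c) * / poch a (S m))) by ring.
  rewrite <- Rmult_assoc. apply Rmult_le_compat_l; [|auto]. apply Rmult_le_pos; lra.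
Qed.

Definition dd x a k := / (a - x + INR k) - / (a + INR k).

Lemma Claim0 (G : R -> R) (Psi : nat -> R -> R) x :
  (forall z, 0 < z -> Un_cv (gauss_seq z) (G z)) ->
  (forall z, 0 < z -> derivable_pt_lim G z (Psi 0%nat z * G z)) ->
  Claim Psi x 0.
Proof.
  intros HG HdG a Ha Hxa.
  set (SS := fun b N => sum_f_R0 (term 0 x b) N).
  assert (HD : Un_cv (fun n => sum_f_R0 (dd x a) n) (Psi 0%nat a - Psi 0%nat (a - x))).
  { apply (cv_ext (fun n => hh a n - hh (a - x) n)).
    - intro n. unfold hh, dd. rewrite minus_sum. ring.
    - apply CV_minus; apply (Psi0_lim G Psi HG HdG); lra. }
  assert (Hstep : forall j, Un_cv (fun N => SS (a + INR j) N - SS (a + INR j + 1) N) (dd x a j)).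
  { intro j. set (b := a + INR j). pose proof (pos_INR j).
    assert (Hb : 0 < b) by (unfold b; lra). assert (Hbx : x < b) by (unfold b; lra).
    apply (cv_ext (fun N => (x / b - poch x (S (S N)) / poch b (S (S N))) / (b - x))).
    - intro N. unfold SS. rewrite <- minus_sum. rewrite <- telescope by auto.
      apply sum_eq; intros m _. symmetry. apply term0_diff; auto.
    - replace (dd x a j) with ((x / b - 0) / (b - x)) by (unfold dd, b; field; lra).
      apply (cv_ext (fun N => (x / b - poch x (S (S N)) / poch b (S (S N))) * / (b - x))).
      intro; reflexivity.
      apply CV_mult. apply CV_minus. apply cv_const.
      apply (cv_shift_fwd (fun n => poch x (S n) / poch b (S n))).
      apply (cv_shift_fwd (fun n => poch x n / poch b n)). apply poch_ratio_cv; auto.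
      apply cv_const. }
  assert (HK : forall K, Un_cv (fun N => SS a N - SS (a + INR (S K)) N) (sum_f_R0 (dd x a) K)).
  { induction K.
    - apply (cv_ext (fun N => SS (a + INR 0) N - SS (a + INR 0 + 1) N)).
      + intro N. replace (a + INR 0) with a by (simpl; ring). replace (INR 1) with 1 by reflexivity. reflexivity.
      + apply Hstep.
    - apply (cv_ext (fun N => (SS a N - SS (a + INR (S K)) N) + (SS (a + INR (S K)) N - SS (a + INR (S K) + 1) N))).
      + intro N. rewrite (S_INR (S K)), Rplus_assoc. ring.
      + rewrite tech5. apply CV_plus; auto. }
  destruct (AA_cv 0 x a Ha Hxa) as [LA HLA].
  assert (HLA0 : 0 <= LA).
  { assert (Hgr : Un_growing (fun N => sum_f_R0 (AA 0 x a) N)).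
    { intro n. simpl. pose proof (AA_nonneg 0 x a (S n) Ha). lra. }
    assert (H1 := growing_ineq _ _ Hgr HLA 0). simpl in H1. pose proof (AA_nonneg 0 x a 0 Ha). lra. }
  intros eps Heps.
  destruct (HD (eps / 3) ltac:(lra)) as [K1 HK1].
  destruct (INR_unbounded (3 * a * LA / eps)) as [K2 HK2].
  set (K := Nat.max K1 K2).
  destruct (HK K (eps / 3) ltac:(lra)) as [N0 HN0].
  exists N0. intros N HN.
  assert (H1 := HN0 N HN). assert (H2 := HK1 K ltac:(unfold K; lia)).
  unfold Rdist in *.
  assert (HSK : INR K2 <= INR (S K)) by (apply le_INR; unfold K; lia).
  assert (H3 := SS_bound x a (INR (S K)) LA N Ha Hxa (pos_INR _) HLA).
  assert (H4 : a / (a + INR (S K)) * LA < eps / 3).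
  { assert (0 < a + INR (S K)) by (pose proof (pos_INR (S K)); lra).
    apply Rmult_lt_reg_r with (3 * (a + INR (S K)) / eps). apply Rdiv_lt_0_compat; lra.
    replace (a / (a + INR (S K)) * LA * (3 * (a + INR (S K)) / eps)) with (3 * a * LA / eps) by (field; lra).
    replace (eps / 3 * (3 * (a + INR (S K)) / eps)) with (a + INR (S K)) by (field; lra).
    lra. }
  fold (SS (a + INR (S K)) N) in H3.
  apply Rabs_def2 in H1. apply Rabs_def2 in H2. apply Rabs_le_between in H3 || (apply Rabs_def2b in H3 || idtac).
  assert (H3' := Rle_abs (SS (a + INR (S K)) N)). assert (H3'' := Rle_abs (- SS (a + INR (S K)) N)).
  rewrite Rabs_Ropp in H3''.
  apply Rabs_def1; fold (SS a N); lra.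
Qed.

Theorem mainTheorem13 :
  forall (G : R -> R) (Psi : nat -> R -> R),
    (forall z, 0 < z -> Un_cv (gauss_seq z) (G z)) ->
    (forall z, 0 < z -> derivable_pt_lim G z (Psi 0%nat z * G z)) ->
    (forall (r : nat) z, 0 < z -> derivable_pt_lim (Psi r) z (Psi (S r) z)) ->
    forall (a x : R), 0 < a -> x < a ->
    forall r : nat,
      infinite_sum
        (fun m : nat =>
           let n := S m in
           / INR n * (poch x n / poch a n) *
           bellY r (fun j => (-1) ^ j * INR (fact (j - 1)) * Hsum n j a))
        (- (Psi r (a - x) - Psi r a)).
Proof.
  intros G Psi HG HdG HPsi a x Ha Hxa r.
  assert (HC : Claim Psi x r).
  { induction r. apply (Claim0 G); auto. apply Claim_step; auto. }
  specialize (HC a Ha Hxa).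
  replace (- (Psi r (a - x) - Psi r a)) with (Psi r a - Psi r (a - x)) by ring.
  intros eps Heps. destruct (HC eps Heps) as [N HN]. exists N. intros n Hn.
  exact (HN n Hn).
Qed.
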